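(* Let $\mathcal P$ be a non-empty family of subsets of a set $X$ which is closed under finite intersections and satisfies $\mathcal P\subseteq\mathcal P_{seq}$. Then the $\mathcal Q_{\mathcal P}$-topology on $X/\mathcal P$ is regular.
   Context: $[x]_{\mathcal P}=\{y\in X:\forall V\in\mathcal P\ (x\in V\iff y\in V)\}$, $X/\mathcal P=\{[x]_{\mathcal P}:x\in X\}$, $q(x)=[x]_{\mathcal P}$, and the $\mathcal Q_{\mathcal P}$-topology is the coarsest topology on $X/\mathcal P$ containing all sets $q[V]$, $V\in\mathcal P$. $\mathcal P_{seq}$ is the family of all sets $W$ for which there exist $\{U_n\}_{n\in\omega},\{V_n\}_{n\in\omega}\subseteq\mathcal P$ with $U_k\subseteq X\setminus V_k\subseteq U_{k+1}$ for every $k$ and $\bigcup_nU_n=W$. Regular spaces are assumed $T_1$. *)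

(* Defs.v *)
From mathcomp Require Import all_boot.
From mathcomp Require Import boolp classical_sets.
Set Implicit Arguments. Unset Strict Implicit. Unset Printing Implicit Defensive.
Local Open Scope classical_set_scope.

Section Defs.
Variable X : Type.
Variable P : set (set X).

Definition cls (x : X) : set X := [set y | forall V, P V -> (V x <-> V y)].

Definition quot : set (set X) := [set c | exists x, c = cls x].

Definition qimg (V : set X) : set (set X) := [set c | exists2 x, V x & c = cls x].

Definition is_topology (S : set (set X)) (tau : set (set (set X))) : Prop :=
  [/\ (forall A, tau A -> A `<=` S),
      tau S,
      (forall A B, tau A -> tau B -> tau (A `&` B)) &
      (forall F : set (set (set X)), F `<=` tau -> tau (\bigcup_(A in F) A))].

(* open sets of the Q_P-topology: the coarsest topology on X/P containing all q[V] *)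
Definition Q_open (U : set (set X)) : Prop :=
  forall tau, is_topology quot tau -> (forall V, P V -> tau (qimg V)) -> tau U.

Definition Q_closed (F : set (set X)) : Prop := F `<=` quot /\ Q_open (quot `\` F).

(* regular, with T1 included *)
Definition Q_regular : Prop :=
  (forall c, quot c -> Q_closed [set c]) /\
  (forall c F, quot c -> Q_closed F -> ~ F c ->
     exists U W, [/\ Q_open U, Q_open W, U c, F `<=` W & U `&` W = set0]).

Definition P_seq : set (set X) :=
  [set W | exists U V : nat -> set X,
     [/\ (forall n, P (U n) /\ P (V n)),
         (forall k, U k `<=` ~` V k /\ ~` V k `<=` U k.+1) &
         \bigcup_n U n = W]].
End Defs.

(* Main.v *)
Require Import Defs.
From mathcomp Require Import all_boot.
From mathcomp Require Import boolp classical_sets.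
Set Implicit Arguments. Unset Strict Implicit.
Local Open Scope classical_set_scope.

Lemma cls_refl {X : Type} (P : set (set X)) x : cls P x x.
Proof. by move=> V _. Qed.

Lemma cls_eq {X : Type} (P : set (set X)) x y :
  cls P x = cls P y -> forall V, P V -> (V x <-> V y).
Proof. move=> e V PV; have H : cls P x y by rewrite e; exact: cls_refl. exact: H. Qed.

Lemma cls_ext {X : Type} (P : set (set X)) x y :
  (forall V, P V -> (V x <-> V y)) -> cls P x = cls P y.
Proof.
move=> h; apply/funext => z; apply/propext; split => H V PV.
- by rewrite -(H V PV) (h V PV).
- by rewrite -(H V PV) (h V PV).
Qed.

Definition basic {X : Type} (P : set (set X)) (B : set (set X)) :=
  B = quot P \/ exists V, P V /\ B = qimg P V.

Definition tau0 {X : Type} (P : set (set X)) (U : set (set X)) :=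
  U `<=` quot P /\ forall c, U c -> exists B, [/\ basic P B, B c & B `<=` U].

Lemma qimg_sub {X : Type} (P : set (set X)) V : qimg P V `<=` quot P.
Proof. by move=> c [x _ ->]; exists x. Qed.

Lemma tau0_top {X : Type} (P : set (set X)) :
  (forall A B, P A -> P B -> P (A `&` B)) -> is_topology (quot P) (tau0 P).
Proof.
move=> PI; split.
- by move=> A [].
- split=> // c qc; exists (quot P); split=> //; by left.
- move=> A B [sA hA] [sB hB]; split; first by move=> c [/sA].
  move=> c [Ac Bc].
  have [B1 [b1 B1c s1]] := hA c Ac; have [B2 [b2 B2c s2]] := hB c Bc.
  case: b1 => [e1|[V1 [PV1 e1]]].
    exists B2; split=> // d B2d; split; [apply: s1; rewrite e1; by apply: sB; apply: s2 | exact: s2].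
  case: b2 => [e2|[V2 [PV2 e2]]].
    exists B1; split=> //; first by right; exists V1. move=> d B1d; split; [exact: s1 | apply: s2; rewrite e2; apply: sA; exact: s1].
  exists (qimg P (V1 `&` V2)); split.
  + right; exists (V1 `&` V2); split=> //; exact: PI.
  + move: B1c B2c; rewrite e1 e2 => -[x V1x ->] [y V2y cy].
    exists y => //; split=> //; exact/(cls_eq cy PV1).
  + move=> d [z [V1z V2z] ->]; split; [apply: s1; rewrite e1 | apply: s2; rewrite e2]; by exists z.
- move=> F sF; split.
    by move=> c [A FA Ac]; have [+ _] := sF A FA; apply.
  move=> c [A FA Ac]; have [_ h] := sF A FA; have [B [bB Bc sB]] := h c Ac.
  exists B; split=> // d Bd; exists A => //; exact: sB.
Qed.

Lemma open_tau0 {X : Type} (P : set (set X)) U :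
  (forall A B, P A -> P B -> P (A `&` B)) -> Q_open P U -> tau0 P U.
Proof.
move=> PI o; apply: o; first exact: tau0_top.
move=> V PV; split; first exact: qimg_sub.
move=> c qc; exists (qimg P V); split=> //; right; by exists V.
Qed.

Lemma basis_open {X : Type} (P : set (set X)) U :
  (forall c, U c -> exists V, [/\ P V, qimg P V c & qimg P V `<=` U]) -> Q_open P U.
Proof.
move=> h tau [_ _ _ tU] tV.
have -> : U = \bigcup_(A in [set A | exists V, [/\ P V, A = qimg P V & A `<=` U]]) A.
  apply/seteqP; split.
  - move=> c Uc; have [V [PV Vc sV]] := h c Uc; exists (qimg P V) => //; by exists V.
  - by move=> c [A [V [_ _ sA]] Ac]; apply: sA.
apply: tU => A [V [PV -> _]]; exact: tV.
Qed.

Lemma seq_split {X : Type} (P : set (set X)) V x :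
  P `<=` P_seq P -> P V -> V x ->
  exists U W, [/\ P U, P W, U x, U `<=` ~` W & (forall y, ~ V y -> W y)].
Proof.
move=> Ps PV Vx; have [U [W [hP hs e]]] := Ps V PV.
have : (\bigcup_n U n) x by rewrite e.
case=> n _ Unx; exists (U n), (W n); split.
- exact: (hP n).1.
- exact: (hP n).2.
- done.
- exact: (hs n).1.
- move=> y nVy; apply: contrapT => nW; apply: nVy; rewrite -e; exists n.+1 => //.
  exact: (hs n).2.
Qed.

Theorem lemma4 (X : Type) (P : set (set X)) :
  (exists V, P V) ->
  (forall A B, P A -> P B -> P (A `&` B)) ->
  P `<=` P_seq P ->
  Q_regular P.
Proof.
move=> _ PI Ps; split.
- move=> c [x ->]; split; first by move=> d ->; exists x.
  apply: basis_open => d [[y ->]] ne.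
  have [V [PV hV]] : exists V, P V /\ V y /\ ~ V x.
    apply: contrapT => hn; apply: ne; apply: cls_ext => V PV; split => Vy.
    + apply: contrapT => nVx; apply: hn; exists V; split=> //; by [].
    + have [U [W [PU PW Ux UW hW]]] := seq_split Ps PV Vy.
      apply: contrapT => nVx; apply: hn; exists W; split=> //; split.
      * exact: hW.
      * by apply: UW.
  exists V; split=> //; first by exists y => //; exact: hV.1.
  move=> e [z Vz ->]; split; first by exists z.
  move=> h; apply: hV.2; exact: (cls_eq h PV).1 Vz.
- move=> c F [x ->] [sF oF] nF.
  have [_ h] := open_tau0 PI oF.
  have [B [bB Bc sB]] := h (cls P x) (conj (ex_intro _ x erefl) nF).
  case: bB => [eB|[V [PV eB]]].
    exists (quot P), set0; split.
    + by move=> tau [].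
    + by apply: basis_open => ? [].
    + by exists x.
    + move=> d Fd; have qd := sF d Fd; have := sB d; rewrite eB => /(_ qd) [].
      by [].
    + by rewrite setI0.
  move: Bc; rewrite eB => -[x' Vx' ex].
  have [U [W [PU PW Ux UW hW]]] := seq_split Ps PV Vx'.
  exists (qimg P U), (qimg P W); split.
  + apply: basis_open => d qd; exists U; split=> //.
  + apply: basis_open => d qd; exists W; split=> //.
  + by exists x'.
  + move=> d Fd; have [y dy] := sF d Fd; subst d; exists y => //; apply: hW => Vy.
    have : (qimg P V) (cls P y) by exists y.
    by rewrite -eB => /sB [_ nF']; apply: nF'.
  + apply/seteqP; split=> // d [[z Uz ->] [w Ww e]].
    by apply: (UW z Uz); rewrite (cls_eq e PW).
Qed.
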